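(* Let $G$ be a $\lambda$-graph and $Q$ a query over $G$. If there exists a sharing equivalence on $G$ containing $Q$, then the spreading $Q^{\#}$ is the smallest sharing equivalence on $G$ containing $Q$.
   Context: A pre-$\lambda$-graph is a directed graph whose nodes are of four kinds: an application node $@(n_1,n_2)$ has exactly two children, its left child $n_1$ and its right child $n_2$; an abstraction node $\lambda(n)$ has exactly one child, its body $n$; a free variable node has no children and carries an atom $\mathrm{id}(n)$ from a fixed set of atoms, distinct free variable nodes carrying distinct atoms; a bound variable node $\mathrm{var}(l)$ has exactly one outgoing binding edge, to an abstraction node $l$ (its binder). Letters $l,l'$ denote abstraction nodes. A trace is a finite sequence of directions from $\{\swarrow,\downarrow,\searrow\}$; $\epsilon$ is the empty trace and $d\cdot\tau$ is the trace $\tau$ extended by one final step $d$. Paths $n\xrightarrow{\tau}m$ are defined inductively: $n\xrightarrow{\epsilon}n$; if $n\xrightarrow{\tau}\lambda(m)$ then $n\xrightarrow{\downarrow\cdot\tau}m$; if $n\xrightarrow{\tau}@(m_1,m_2)$ then $n\xrightarrow{\swarrow\cdot\tau}m_1$ and $n\xrightarrow{\searrow\cdot\tau}m_2$ (binding edges are never followed). We write $n\xrightarrow{\tau}$ if $n\xrightarrow{\tau}m$ for some $m$. The path $n\xrightarrow{\tau}$ crosses a node $m$ if either $n\xrightarrow{\tau}m$, or $\tau=d\cdot\tau'$ and $n\xrightarrow{\tau'}$ crosses $m$. A root is a node $r$ such that the only path ending in $r$ has the empty trace. A node $m$ dominates $n$ if every path from a root to $n$ crosses $m$. A $\lambda$-graph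 is a pre-$\lambda$-graph that has finitely many nodes, is acyclic ($n\xrightarrow{\tau}n$ holds only for $\tau=\epsilon$), and is dominated (every bound variable node $\mathrm{var}(l)$ is dominated by its binder $l$). Two nodes are homogeneous if both are application nodes, or both abstraction nodes, or both free variable nodes, or both bound variable nodes; a binary relation $R$ on nodes is homogeneous if it only relates homogeneous nodes. Rules: $(\swarrow)$: $@(n_1,n_2)\,R\,@(m_1,m_2)$ implies $n_1\,R\,m_1$; $(\searrow)$: $@(n_1,n_2)\,R\,@(m_1,m_2)$ implies $n_2\,R\,m_2$; $(\downarrow)$: $\lambda(n)\,R\,\lambda(m)$ implies $n\,R\,m$; $(\circlearrowright)$: $\mathrm{var}(n)\,R\,\mathrm{var}(m)$ implies $n\,R\,m$. $R$ is propagated if closed under $(\swarrow),(\downarrow),(\searrow)$. $R$ is open if $n\,R\,m$ implies $n=m$ for all free variable nodes $n,m$. A blind bisimulation is a homogeneous propagated relation; a bisimulation is a blind bisimulation closed also under $(\circlearrowright)$. A blind sharing equivalence is a blind bisimulation that is an equivalence relation; a sharing equivalence is an open bisimulation that is an equivalence relation. $R^*$ denotes the reflexive–symmetric–transitive closure of $R$; $R^{\Downarrow}$ (propagation) is the smallest propagated relation containing $R$; $R^{\#}$ (spreading) is the smallest propagated equivalence relation containing $R$. A query over $G$ is a binary relation on the roots of $G$. *)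

(* Defs.v *)
From mathcomp Require Import all_boot.
Set Implicit Arguments.
Unset Strict Implicit.
Unset Printing Implicit Defensive.

Inductive label (V A : Type) : Type :=
| App  of V & V
| Abs  of V
| FVar of A
| BVar of V.        (* var(l), binding edge to l *)
Arguments App {V A}. Arguments Abs {V A}. Arguments FVar {V A}. Arguments BVar {V A}.

Section LambdaGraphs.
Variables (V : finType) (A : Type) (G : V -> label V A).

Definition is_abs (n : V) : Prop := exists b, G n = Abs b.

Definition pre_lambda_graph : Prop :=
  (forall n l, G n = BVar l -> is_abs l) /\
  (forall n m a, G n = FVar a -> G m = FVar a -> n = m).

Inductive dir := DSW | DDown | DSE.

(* traces: the head of the list is the LAST step, i.e. d :: tau is d . tau *)
Definition trace := seq dir.

Inductive path (n : V) : trace -> V -> Prop :=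
| path_nil : path n [::] n
| path_down tau m b : path n tau m -> G m = Abs b -> path n (DDown :: tau) b
| path_sw tau m m1 m2 : path n tau m -> G m = App m1 m2 -> path n (DSW :: tau) m1
| path_se tau m m1 m2 : path n tau m -> G m = App m1 m2 -> path n (DSE :: tau) m2.

Fixpoint crosses (n : V) (tau : trace) (m : V) : Prop :=
  path n tau m \/ (match tau with [::] => False | _ :: tau' => crosses n tau' m end).

Definition is_root (r : V) : Prop := forall n tau, path n tau r -> tau = [::].

Definition dominates (m n : V) : Prop :=
  forall r tau, is_root r -> path r tau n -> crosses r tau m.

Definition acyclic : Prop := forall n tau, path n tau n -> tau = [::].

Definition dominated : Prop := forall n l, G n = BVar l -> dominates l n.

(* V is a finType, so finiteness is built in *)
Definition lambda_graph : Prop := pre_lambda_graph /\ acyclic /\ dominated.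

Definition nrel := V -> V -> Prop.

Definition homogeneous_nodes (n m : V) : Prop :=
  match G n, G m with
  | App _ _, App _ _ | Abs _, Abs _ | FVar _, FVar _ | BVar _, BVar _ => True
  | _, _ => False
  end.

Definition homogeneous (R : nrel) : Prop := forall n m, R n m -> homogeneous_nodes n m.

Definition propagated (R : nrel) : Prop :=
  (forall n m n1 n2 m1 m2, R n m -> G n = App n1 n2 -> G m = App m1 m2 -> R n1 m1) /\
  (forall n m b c, R n m -> G n = Abs b -> G m = Abs c -> R b c) /\
  (forall n m n1 n2 m1 m2, R n m -> G n = App n1 n2 -> G m = App m1 m2 -> R n2 m2).

Definition closed_var (R : nrel) : Prop :=
  forall n m l l', R n m -> G n = BVar l -> G m = BVar l' -> R l l'.

Definition open_rel (R : nrel) : Prop :=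
  forall n m a b, R n m -> G n = FVar a -> G m = FVar b -> n = m.

Definition equivalence (R : nrel) : Prop :=
  (forall n, R n n) /\ (forall n m, R n m -> R m n) /\
  (forall n m p, R n m -> R m p -> R n p).

Definition blind_bisimulation (R : nrel) : Prop := homogeneous R /\ propagated R.
Definition bisimulation (R : nrel) : Prop := blind_bisimulation R /\ closed_var R.
Definition sharing_equivalence (R : nrel) : Prop :=
  open_rel R /\ bisimulation R /\ equivalence R.

Definition rel_incl (R S : nrel) : Prop := forall n m, R n m -> S n m.

Definition spreading (R : nrel) : nrel :=
  fun n m => forall S : nrel, propagated S -> equivalence S -> rel_incl R S -> S n m.

Definition query (Q : nrel) : Prop := forall n m, Q n m -> is_root n /\ is_root m.

End LambdaGraphs.

(* Main.v *)
Require Import Defs.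
From mathcomp Require Import all_boot.
Set Implicit Arguments.
Unset Strict Implicit.

Lemma path_cat (V : finType) (A : Type) (G : V -> label V A) a t1 b t2 c :
  Defs.path G a t1 b -> Defs.path G b t2 c -> Defs.path G a (t2 ++ t1) c.
Proof.
move=> H1 H2; elim: H2 => [|t m b' _ IH Gm|t m m1 m2 _ IH Gm|t m m1 m2 _ IH Gm] /=.
- exact: H1.
- exact: path_down IH Gm.
- exact: path_sw IH Gm.
- exact: path_se IH Gm.
Qed.

Lemma path_split (V : finType) (A : Type) (G : V -> label V A) a t1 t2 c :
  Defs.path G a (t2 ++ t1) c -> exists b, Defs.path G a t1 b /\ Defs.path G b t2 c.
Proof.
elim: t2 c => [|d t2 IH] c /= H.
  by exists c; split => //; constructor.
inversion H as [|t0 m0 b0 Hp Gm|t0 m0 u0 v0 Hp Gm|t0 m0 u0 v0 Hp Gm]; subst.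
- have [b [Hb1 Hb2]] := IH _ Hp; exists b; split => //; exact: path_down Hb2 Gm.
- have [b [Hb1 Hb2]] := IH _ Hp; exists b; split => //; exact: path_sw Hb2 Gm.
- have [b [Hb1 Hb2]] := IH _ Hp; exists b; split => //; exact: path_se Hb2 Gm.
Qed.

Lemma path_det (V : finType) (A : Type) (G : V -> label V A) a t x y :
  Defs.path G a t x -> Defs.path G a t y -> x = y.
Proof.
move=> H; elim: H y => [|t0 m b _ IH Gm|t0 m m1 m2 _ IH Gm|t0 m m1 m2 _ IH Gm] y Hy;
  inversion Hy as [|t1 m0 b0 Hp Gm'|t1 m0 u0 v0 Hp Gm'|t1 m0 u0 v0 Hp Gm']; subst => //.
- have E := IH _ Hp; subst; congruence.
- have E := IH _ Hp; subst; congruence.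
- have E := IH _ Hp; subst; congruence.
Qed.

Lemma path_transfer (V : finType) (A : Type) (G : V -> label V A) (R : nrel V) a b t x y :
  propagated G R -> R a b -> Defs.path G a t x -> Defs.path G b t y -> R x y.
Proof.
move=> [P1 [P2 P3]] Rab H; elim: H y => [|t0 m c _ IH Gm|t0 m m1 m2 _ IH Gm|t0 m m1 m2 _ IH Gm] y Hy;
  inversion Hy as [|t1 m0 b0 Hp Gm'|t1 m0 u0 v0 Hp Gm'|t1 m0 u0 v0 Hp Gm']; subst => //.
- exact: P2 (IH _ Hp) Gm Gm'.
- exact: P1 (IH _ Hp) Gm Gm'.
- exact: P3 (IH _ Hp) Gm Gm'.
Qed.

Lemma simulation (V : finType) (A : Type) (G : V -> label V A) (R : nrel V) a b t x :
  blind_bisimulation G R -> R a b -> Defs.path G a t x -> exists y, Defs.path G b t y /\ R x y.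
Proof.
move=> [Hh [P1 [P2 P3]]] Rab H; elim: H => [|t0 m c _ [y [Py Ry]] Gm|t0 m m1 m2 _ [y [Py Ry]] Gm|t0 m m1 m2 _ [y [Py Ry]] Gm].
- by exists b; split => //; constructor.
- have := Hh _ _ Ry; rewrite /homogeneous_nodes Gm; case Gy: (G y) => [u v|c'|f|l] // _.
  exists c'; split; [exact: path_down Py Gy | exact: P2 Ry Gm Gy].
- have := Hh _ _ Ry; rewrite /homogeneous_nodes Gm; case Gy: (G y) => [u v|c'|f|l] // _.
  exists u; split; [exact: path_sw Py Gy | exact: P1 Ry Gm Gy].
- have := Hh _ _ Ry; rewrite /homogeneous_nodes Gm; case Gy: (G y) => [u v|c'|f|l] // _.
  exists v; split; [exact: path_se Py Gy | exact: P3 Ry Gm Gy].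
Qed.

Lemma path_bound_aux (V : finType) (A : Type) (G : V -> label V A) n t e :
  acyclic G -> Defs.path G n t e ->
  exists s : seq V, [/\ uniq s, size s = (size t).+1 & forall x, x \in s -> exists t1, Defs.path G x t1 e].
Proof.
move=> Hac H; elim: H => [|t0 m c _ [s [Us Ss Hs]] Gm|t0 m m1 m2 _ [s [Us Ss Hs]] Gm|t0 m m1 m2 _ [s [Us Ss Hs]] Gm].
- exists [:: n]; split => // x; rewrite inE => /eqP ->; exists [::]; constructor.
- exists (c :: s); split => /=; [|by rewrite Ss|].
  + rewrite Us andbT; apply/negP => /Hs [t1 P].
    by have := Hac _ _ (path_down P Gm).
  + move=> x; rewrite inE => /orP [/eqP ->|/Hs [t1 P]].
      by exists [::]; constructor.
    by exists (DDown :: t1); exact: path_down P Gm.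
- exists (m1 :: s); split => /=; [|by rewrite Ss|].
  + rewrite Us andbT; apply/negP => /Hs [t1 P].
    by have := Hac _ _ (path_sw P Gm).
  + move=> x; rewrite inE => /orP [/eqP ->|/Hs [t1 P]].
      by exists [::]; constructor.
    by exists (DSW :: t1); exact: path_sw P Gm.
- exists (m2 :: s); split => /=; [|by rewrite Ss|].
  + rewrite Us andbT; apply/negP => /Hs [t1 P].
    by have := Hac _ _ (path_se P Gm).
  + move=> x; rewrite inE => /orP [/eqP ->|/Hs [t1 P]].
      by exists [::]; constructor.
    by exists (DSE :: t1); exact: path_se P Gm.
Qed.

Lemma path_bound (V : finType) (A : Type) (G : V -> label V A) n t m :
  acyclic G -> Defs.path G n t m -> size t < #|V|.
Proof.
move=> Hac H; have [s [Us Ss _]] := path_bound_aux Hac H.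
rewrite -ltnS -Ss; apply: leq_trans (max_card (mem s)).
by move/card_uniqP: Us => ->.
Qed.

Lemma no_cycle_rel (V : finType) (A : Type) (G : V -> label V A) (R : nrel V) p q g :
  acyclic G -> blind_bisimulation G R -> equivalence R ->
  R p q -> Defs.path G p g q -> g <> [::] -> False.
Proof.
move=> Hac Hb [Rr [Rs Rt]] Rpq Pq Hg.
have It : forall k, exists z t, [/\ Defs.path G p t z, size t = k * size g & R p z].
  elim=> [|k [z [t [Pz St Rz]]]].
    by exists p, [::]; split => //; constructor.
  have [w [Pw Rw]] := simulation Hb Rz Pq.
  exists w, (g ++ t); split.
  - exact: path_cat Pz Pw.
  - by rewrite size_cat St mulSn.
  - exact: Rt _ _ _ Rpq Rw.
have [z [t [Pz St _]]] := It #|V|.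
have := path_bound Hac Pz; rewrite St.
case: g Hg {Pq It St} => [//|d g] _ /=.
by rewrite mulnS ltnNge leq_addr.
Qed.

Lemma crosses_path (V : finType) (A : Type) (G : V -> label V A) n s m :
  crosses G n s m -> exists a b, s = a ++ b /\ Defs.path G n b m.
Proof.
elim: s => [|d s IH] /= [H|H] //.
- by exists [::], [::].
- by exists [::], (d :: s).
- have [a [b [-> P]]] := IH H; by exists (d :: a), b.
Qed.

Lemma cat_split (T : Type) (a b a' b' : seq T) :
  a ++ b = a' ++ b' -> (exists g, b' = g ++ b) \/ (exists g, b = g ++ b').
Proof.
elim: a a' => [|x a IH] [|x' a'] /= E.
- by left; exists [::].
- by right; exists (x' :: a').
- by left; exists (x :: a); rewrite -E.
- case: E => _ /IH.
  exact.
Qed.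

Lemma spreading_equiv (V : finType) (A : Type) (G : V -> label V A) Q :
  equivalence (spreading G Q).
Proof.
split; [|split].
- by move=> n S _ [Sr _] _.
- by move=> n m H S Sp Se Si; have [_ [Ss _]] := Se; apply: Ss; apply: H.
- move=> n m p H1 H2 S Sp Se Si; have [_ [_ St]] := Se.
  exact: St (H1 S Sp Se Si) (H2 S Sp Se Si).
Qed.

Lemma spreading_prop (V : finType) (A : Type) (G : V -> label V A) Q :
  propagated G (spreading G Q).
Proof.
split; [|split].
- move=> n m n1 n2 m1 m2 H Gn Gm S Sp Se Si; have [P1 _] := Sp.
  exact: P1 (H S Sp Se Si) Gn Gm.
- move=> n m b c H Gn Gm S Sp Se Si; have [_ [P2 _]] := Sp.
  exact: P2 (H S Sp Se Si) Gn Gm.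
- move=> n m n1 n2 m1 m2 H Gn Gm S Sp Se Si; have [_ [_ P3]] := Sp.
  exact: P3 (H S Sp Se Si) Gn Gm.
Qed.

Lemma key (V : finType) (A : Type) (G : V -> label V A) (Q S0 : nrel V) r r' s x y l l' :
  lambda_graph G -> query G Q -> sharing_equivalence G S0 -> rel_incl Q S0 ->
  Q r r' -> Defs.path G r s x -> Defs.path G r' s y -> G x = BVar l -> G y = BVar l' ->
  spreading G Q l l'.
Proof.
move=> [_ [Hac Hdom]] HQ [_ [[Hb Hcv] Heq]] HQS Qrr Px Py Gx Gy.
have [Rr [Rs Rt]] := Heq.
have [Rootr Rootr'] := HQ _ _ Qrr.
have S0rr := HQS _ _ Qrr.
have [a [b [Es Pb]]] := crosses_path (Hdom _ _ Gx r s Rootr Px).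
have [a' [b' [Es' Pb']]] := crosses_path (Hdom _ _ Gy r' s Rootr' Py).
have S0xy := path_transfer Hb.2 S0rr Px Py.
have S0ll := Hcv _ _ _ _ S0xy Gx Gy.
have Hbb : b = b'.
  have := cat_split (etrans (esym Es) Es') => -[[g Eg]|[g Eg]].
  - case: g Eg => [//|d g] Eg.
    exfalso; move: Pb'; rewrite Eg => /path_split [p [Pp Pl']].
    have S0lp := path_transfer Hb.2 S0rr Pb Pp.
    apply: (no_cycle_rel Hac Hb Heq _ Pl') => //.
    exact: Rt _ _ _ (Rs _ _ S0lp) S0ll.
  - case: g Eg => [//|d g] Eg.
    exfalso; move: Pb; rewrite Eg => /path_split [p [Pp Pl]].
    have S0pl' := path_transfer Hb.2 S0rr Pp Pb'.
    apply: (no_cycle_rel Hac Hb Heq _ Pl) => //.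
    exact: Rt _ _ _ S0pl' (Rs _ _ S0ll).
subst b'.
apply: path_transfer (spreading_prop G Q) _ Pb Pb'.
by move=> S Sp Se Si; apply: Si.
Qed.

Unset Implicit Arguments.

Theorem mainTheorem2 (V : finType) (A : Type) (G : V -> label V A) (Q : nrel V) :
  lambda_graph G -> query G Q ->
  (exists S : nrel V, sharing_equivalence G S /\ rel_incl Q S) ->
  sharing_equivalence G (spreading G Q) /\ rel_incl Q (spreading G Q) /\
  (forall S : nrel V, sharing_equivalence G S -> rel_incl Q S -> rel_incl (spreading G Q) S).
Proof.
move=> HG HQ [S0 [HS0 HQS]].
have Hmin : forall S : nrel V, sharing_equivalence G S -> rel_incl Q S -> rel_incl (spreading G Q) S.
  move=> S [_ [[[_ Sp] _] Se]] Si n m H; exact: H S Sp Se Si.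
have HQsp : rel_incl Q (spreading G Q) by move=> n m H S _ _ Si; apply: Si.
have Hsub := Hmin S0 HS0 HQS.
have [Hopen [[[Hhom Hprop] Hcv] Heq]] := HS0.
have [Rr [Rs Rt]] := spreading_equiv G Q.
pose Inv := fun n m => S0 n m /\ forall s x y l l', Defs.path G n s x -> Defs.path G m s y ->
  G x = BVar l -> G y = BVar l' -> spreading G Q l l'.
have HInv : rel_incl (spreading G Q) Inv.
  move=> n m H; apply: H.
  - have [P1 [P2 P3]] := Hprop.
    split; [|split].
    + move=> n0 m0 n1 n2 m1 m2 [S H] Gn Gm; split; first exact: P1 S Gn Gm.
      move=> s x y l l' Px Py; apply: H.
      * exact: (path_cat (path_sw (path_nil G n0) Gn) Px).
      * exact: (path_cat (path_sw (path_nil G m0) Gm) Py).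
    + move=> n0 m0 b c [S H] Gn Gm; split; first exact: P2 S Gn Gm.
      move=> s x y l l' Px Py; apply: H.
      * exact: (path_cat (path_down (path_nil G n0) Gn) Px).
      * exact: (path_cat (path_down (path_nil G m0) Gm) Py).
    + move=> n0 m0 n1 n2 m1 m2 [S H] Gn Gm; split; first exact: P3 S Gn Gm.
      move=> s x y l l' Px Py; apply: H.
      * exact: (path_cat (path_se (path_nil G n0) Gn) Px).
      * exact: (path_cat (path_se (path_nil G m0) Gm) Py).
  - have [Sr [Ss St]] := Heq.
    split; [|split].
    + move=> n0; split => // s x y l l' Px Py Gx Gy.
      have E := path_det Px Py; subst y; rewrite Gx in Gy; case: Gy => ->; exact: Rr.
    + move=> n0 m0 [S H]; split; first exact: Ss.
      move=> s x y l l' Px Py Gx Gy; apply: Rs; exact: H Py Px Gy Gx.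
    + move=> n0 m0 p0 [S1 H1] [S2 H2]; split; first exact: St S1 S2.
      move=> s x z l l' Px Pz Gx Gz.
      have [y [Py Sxy]] := simulation (conj Hhom Hprop) S1 Px.
      have := Hhom _ _ Sxy; rewrite /homogeneous_nodes Gx.
      case Gy: (G y) => [u v|c|f|l''] // _.
      exact: Rt (H1 _ _ _ _ _ Px Py Gx Gy) (H2 _ _ _ _ _ Py Pz Gy Gz).
  - move=> r r' Qr; split; first exact: HQS.
    move=> s x y l l' Px Py Gx Gy; exact: key HG HQ HS0 HQS Qr Px Py Gx Gy.
split; [|split => //].
split; [|split; [split; [split|]|]].
- move=> n m a b H Gn Gm; exact: Hopen (Hsub _ _ H) Gn Gm.
- move=> n m H; exact: Hhom (Hsub _ _ H).
- exact: spreading_prop.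
- move=> n m l l' H Gn Gm; have [_ Hi] := HInv _ _ H.
  exact: Hi (path_nil G n) (path_nil G m) Gn Gm.
- exact: spreading_equiv.
Qed.
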